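(* For every non-decreasing function $f:(0,1)\to(0,1)$ there is a non-decreasing function $f':(0,1)\to(0,1)$ with $f'(x)<f(x)$ for all $x\in(0,1)$ such that the following holds. Let $\rho,\nu,\tau,\alpha\in(0,1)$ and $n,k,\ell\in\mathbb N$ satisfy $1/n\leq\rho\leq f'(\nu)$, $\nu\leq\tau\leq f'(\alpha)$. Then there exist $\zeta,\delta,\gamma,\beta,\eta$ with $\rho\leq f(\eta)$, $\eta\leq f(\beta)$, $\beta\leq f(\gamma)$, $\gamma\leq f(\zeta)$, $\zeta\leq f(\nu)$ and $\tau<\delta<\alpha$, such that for every $n$-vertex $D$-regular graph $G$ with $D\geq\alpha n$, every robust partition $\mathcal V$ of $G$ with parameters $\rho,\nu,\tau,k,\ell$ is a clustering of $G$ with parameters $\zeta,\delta,\gamma,\beta,\eta$ (with $c_{\min}=\alpha$, where for each bipartite part $W_j$ its bipartition $A_j,B_j$ serves as the partition witnessing that $W_j$ is $\beta$-almost-bipartite, and each part $V_i$ is $\gamma$-far-from-bipartite).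
   Context: For a graph $G$ and $S,T\subseteq V(G)$: $\overline{S}=V(G)\setminus S$; $d_S(v)=|N(v)\cap S|$; $E_G(S,T)=\{xy\in E(G):x\in S,y\in T\}$, $e_G(S,T)=|E_G(S,T)|$. For an $N$-vertex graph $H$, $\mathrm{RN}_{\nu,H}(S)=\{v:d_S(v)\ge\nu N\}$; $H$ is a robust $(\nu,\tau)$-expander if $|\mathrm{RN}_{\nu,H}(S)|\ge|S|+\nu N$ for all $S$ with $\tau N\le|S|\le(1-\tau)N$; $H$ is a bipartite robust $(\nu,\tau)$-expander with bipartition $A,B$ if this inequality holds for all $S\subseteq A$ with $\tau|A|\le|S|\le(1-\tau)|A|$. $\mathcal V=\{V_1,\dots,V_k,W_1,\dots,W_\ell\}$ is a robust partition of an $n$-vertex $D$-regular $G$ with parameters $\rho,\nu,\tau,k,\ell$ ($0<\rho\le\nu\le\tau<1$) if: (D1) it partitions $V(G)$; (D2) each $V_i$ satisfies $|V_i|\ge\sqrt\rho n$, $e_G(V_i,\overline{V_i})\le\rho n^2$ and $G[V_i]$ is a robust $(\nu,\tau)$-expander; (D3) each $W_j$ has a partition $A_j,B_j$ with $|A_j|,|B_j|\ge\sqrt\rho n$, $||A_j|-|B_j||\le\rho n$, $e_G(A_j,\overline{B_j})+e_G(B_j,\overline{A_j})\le\rho n^2$ and $G[W_j]$ a bipartite robust $(\nu,\tau)$-expander with bipartition $A_j,B_j$; (D4) $d_X(x)\ge d_{X'}(x)$ for all $X,X'\in\mathcal V$, $x\in X$; (D5) $d_{B_j}(u)\ge d_{A_j}(u)$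 for $u\in A_j$, $d_{A_j}(v)\ge d_{B_j}(v)$ for $v\in B_j$; (D6) $k+2\ell\le\lfloor(1+\rho^{1/3})n/D\rfloor$; (D7) each $X\in\mathcal V$ has all but at most $\rho n$ vertices with $d_X(x)\ge D-\rho n$. Clustering: a cut of $A\subseteq V(G)$ is a partition $X,Y$ of $A$ into non-empty sets; it is $\zeta$-sparse if $e_G(X,Y)\le\zeta|X||Y|$. $A$ is $\beta$-almost-bipartite if there is a partition $X,Y$ of $A$ such that $G[A]$ has at most $\beta n^2$ edges not in $E_G(X,Y)$; otherwise $A$ is $\beta$-far-from-bipartite. For $c_{\min}\in(0,1)$ and $G$ an $n$-vertex $D$-regular graph with $D\ge c_{\min}n$, a clustering of $G$ with parameters $\zeta,\delta,\gamma,\beta,\eta$ is a partition $\{A_1,\dots,A_r\}$ of $V(G)$ into non-empty sets such that: (a) at most $\eta n^2$ edges of $G$ have ends in different $A_i$; (b) $\delta(G[A_i])\ge\delta n$ for each $i$; (c) no $A_i$ has a $\zeta$-sparse cut; (d) each $A_i$ is either $\beta$-almost-bipartite (with a specified witnessing partition) or $\gamma$-far-from-bipartite. *)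

(* Defs.v *)
From HB Require Import structures.
From mathcomp Require Import all_boot all_order all_algebra.
From mathcomp Require Import all_classical all_reals all_analysis.
Set Implicit Arguments. Unset Strict Implicit. Unset Printing Implicit Defensive.
Import Order.TTheory GRing.Theory Num.Theory.
Local Open Scope ring_scope.

Definition simple_graph (T : finType) (e : rel T) : Prop :=
  symmetric e /\ irreflexive e.

Section Graphs.
Variables (T : finType) (e : rel T).

Definition deg_in (S : {set T}) (v : T) : nat := #|[set u in S | e v u]|.

Definition regular (D : nat) : Prop := forall v : T, deg_in [set: T] v = D.

Definition Eset (S U : {set T}) : {set {set T}} :=
  [set p : {set T} | [exists x : T, exists y : T,
     [&& p == [set x; y], e x y, x \in S & y \in U]]].

Definition eG (S U : {set T}) : nat := #|Eset S U|.

Variable R : realType.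

Definition RN (Hs : {set T}) (nu : R) (S : {set T}) : {set T} :=
  [set v in Hs | nu * #|Hs|%:R <= (deg_in S v)%:R].

Definition robust_expander (Hs : {set T}) (nu tau : R) : Prop :=
  forall S : {set T}, S \subset Hs ->
    tau * #|Hs|%:R <= #|S|%:R -> #|S|%:R <= (1 - tau) * #|Hs|%:R ->
    #|S|%:R + nu * #|Hs|%:R <= #|RN Hs nu S|%:R.

Definition bip_robust_expander (A B : {set T}) (nu tau : R) : Prop :=
  forall S : {set T}, S \subset A ->
    tau * #|A|%:R <= #|S|%:R -> #|S|%:R <= (1 - tau) * #|A|%:R ->
    #|S|%:R + nu * #|A :|: B|%:R <= #|RN (A :|: B) nu S|%:R.

Definition rp_part (k l : nat) (Vs : 'I_k -> {set T}) (As Bs : 'I_l -> {set T})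
  (p : 'I_k + 'I_l) : {set T} :=
  match p with inl i => Vs i | inr j => As j :|: Bs j end.

Definition robust_partition (n D : nat) (rho nu tau : R) (k l : nat)
  (Vs : 'I_k -> {set T}) (As Bs : 'I_l -> {set T}) : Prop :=
  let P := rp_part Vs As Bs in
  let nr := (n%:R : R) in
  (0 < rho /\ rho <= nu /\ nu <= tau /\ tau < 1) /\
   (* (D1) *)
   ((forall p q, p != q -> [disjoint P p & P q]) /\
     (forall x : T, exists p, x \in P p)) /\
   (* (D2) *)
   (forall i : 'I_k,
      [/\ Num.sqrt rho * nr <= #|Vs i|%:R,
          (eG (Vs i) (~: Vs i))%:R <= rho * nr ^+ 2
        & robust_expander (Vs i) nu tau]) /\
   (* (D3) *)
   (forall j : 'I_l,
      [/\ [disjoint As j & Bs j],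
          Num.sqrt rho * nr <= #|As j|%:R /\ Num.sqrt rho * nr <= #|Bs j|%:R,
          `|#|As j|%:R - #|Bs j|%:R| <= rho * nr,
          (eG (As j) (~: Bs j) + eG (Bs j) (~: As j))%:R <= rho * nr ^+ 2
        & bip_robust_expander (As j) (Bs j) nu tau]) /\
   (* (D4) *)
   (forall p q (x : T), x \in P p -> (deg_in (P q) x <= deg_in (P p) x)%N) /\
   (* (D5) *)
   (forall j : 'I_l,
      (forall u, u \in As j -> (deg_in (As j) u <= deg_in (Bs j) u)%N) /\
      (forall v, v \in Bs j -> (deg_in (Bs j) v <= deg_in (As j) v)%N)) /\
   (* (D6) *)
   ((k + 2 * l)%:~R <=
      (Num.floor ((1 + powR rho (3%:R^-1)) * nr / D%:R))%:~R :> R) /\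
   (* (D7) *)
   (forall p, (#|[set x in P p | ~~ (D%:R - rho * nr <= (deg_in (P p) x)%:R)]|%:R
               <= rho * nr)).

Definition is_cut (Af X Y : {set T}) : Prop :=
  [/\ X :|: Y = Af, [disjoint X & Y], X != finset.set0 & Y != finset.set0].

Definition sparse_cut (zeta : R) (X Y : {set T}) : Prop :=
  (eG X Y)%:R <= zeta * #|X|%:R * #|Y|%:R.

Definition bipartition (Af X Y : {set T}) : Prop :=
  X :|: Y = Af /\ [disjoint X & Y].

Definition non_cross_edges (Af X Y : {set T}) : nat :=
  #|Eset Af Af :\: Eset X Y|.

Definition almost_bipartite_with (n : nat) (beta : R) (Af X Y : {set T}) : Prop :=
  bipartition Af X Y /\ (non_cross_edges Af X Y)%:R <= beta * (n%:R) ^+ 2.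

Definition far_from_bipartite (n : nat) (gamma : R) (Af : {set T}) : Prop :=
  forall X Y, bipartition Af X Y -> gamma * (n%:R) ^+ 2 < (non_cross_edges Af X Y)%:R.

Definition cross_part_edges (I : finType) (P : I -> {set T}) : nat :=
  #|[set p : {set T} | [exists x : T, exists y : T,
      [&& p == [set x; y], e x y & [forall i, ~~ ((x \in P i) && (y \in P i))]]]]|.

(* Clustering of the n-vertex D-regular graph G with D >= cmin n, with
   parameters zeta,delta,gamma,beta,eta; spec i = Some (X,Y) means part i is
   declared beta-almost-bipartite witnessed by X,Y; None means it is declared
   gamma-far-from-bipartite. *)
Definition clustering (n D : nat) (cmin : R) (I : finType) (P : I -> {set T})
  (spec : I -> option ({set T} * {set T}))
  (zeta delta gamma beta eta : R) : Prop :=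
  cmin * n%:R <= D%:R /\
      ((forall i j, i != j -> [disjoint P i & P j]) /\
        (forall x : T, exists i, x \in P i) /\ (forall i, P i != finset.set0)) /\
      (* (a) *) (cross_part_edges P)%:R <= eta * (n%:R) ^+ 2 /\
      (* (b) *) (forall i x, x \in P i -> delta * n%:R <= (deg_in (P i) x)%:R) /\
      (* (c) *) (forall i X Y, is_cut (P i) X Y -> ~ sparse_cut zeta X Y) /\
      (* (d) *) (forall i, match spec i with
                 | Some (X, Y) => almost_bipartite_with n beta (P i) X Y
                 | None => far_from_bipartite n gamma (P i)
                 end).

End Graphs.

Definition rp_spec (T : finType) (k l : nat) (As Bs : 'I_l -> {set T})
  (p : 'I_k + 'I_l) : option ({set T} * {set T}) :=
  match p with inl _ => None | inr j => Some (As j, Bs j) end.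

Definition in01 (R : realType) (x : R) : Prop := 0 < x < 1.

(* f : (0,1) -> (0,1) non-decreasing (f represented as a function R -> R,
   only its values on (0,1) matter) *)
Definition unit_nondecr (R : realType) (f : R -> R) : Prop :=
  (forall x, in01 x -> in01 (f x)) /\
  (forall x y, in01 x -> in01 y -> x <= y -> f x <= f y).

(* Main.v *)
Require Import Defs.
From HB Require Import structures.
From mathcomp Require Import all_boot all_order all_algebra.
From mathcomp Require Import all_classical all_reals all_analysis.
From mathcomp Require Import lra zify ring.
From mathcomp Require Import fintype finset bigop.
Import Order.TTheory GRing.Theory Num.Theory.
Set Implicit Arguments. Unset Strict Implicit. Unset Printing Implicit Defensive.
Local Open Scope ring_scope.


Section Comb.
Variables (T : finType) (e : rel T).
Hypothesis esym : symmetric e.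
Hypothesis eirr : irreflexive e.

Lemma pcard (Q : T -> T -> bool) :
  #|[set p : T * T | Q p.1 p.2]| = (\sum_y #|[set x | Q y x]|)%N.
Proof.
rewrite -sum1dep_card -(pair_big_dep xpredT Q (fun _ _ => 1%N)) /=.
by apply: eq_bigr => y _; rewrite sum1dep_card.
Qed.

Definition Pset (X Y : {set T}) : {set T * T} :=
  [set p : T * T | (p.1 \in Y) && ((p.2 \in X) && e p.1 p.2)].

Lemma sum_deg (X Y : {set T}) : (\sum_(y in Y) deg_in e X y)%N = #|Pset X Y|.
Proof.
rewrite /Pset (pcard (fun a b => (a \in Y) && ((b \in X) && e a b))) big_mkcond /=.
apply: eq_bigr => y _.
case: (y \in Y) => /=; last by rewrite cards0.
by rewrite /deg_in; congr #|_|; apply/setP => x; rewrite !inE.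
Qed.

Lemma Eset_im (X Y : {set T}) : Eset e X Y = [set [set p.2; p.1] | p in Pset X Y].
Proof.
apply/setP => s; rewrite inE; apply/idP/imsetP.
- case/existsP => x /existsP [y /and4P [/eqP -> exy xX yY]].
  exists (y, x); first by rewrite inE /= yY xX esym.
  by [].
- case=> [[y x]]; rewrite inE /= => /and3P [yY xX eyx] ->.
  apply/existsP; exists x; apply/existsP; exists y.
  by rewrite eqxx xX yY esym eyx.
Qed.

Lemma eG_le (X Y : {set T}) : (eG e X Y <= #|Pset X Y|)%N.
Proof. by rewrite /eG Eset_im leq_imset_card. Qed.

Lemma eG_disj (X Y : {set T}) : [disjoint X & Y] -> eG e X Y = #|Pset X Y|.
Proof.
move=> dXY; rewrite /eG Eset_im card_in_imset //.
move=> [y x] [y' x']; rewrite !inE /= => /and3P [yY xX _] /and3P [yY' xX' _] h.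
have hy : y \in [set x'; y'] by rewrite -h !inE eqxx orbT.
have hx : x \in [set x'; y'] by rewrite -h !inE eqxx.
move: hy hx; rewrite !inE => /orP [/eqP yx'|/eqP ->] /orP [/eqP ->|/eqP xy'] //.
- by move: (disjointFr dXY xX'); rewrite -yx' yY.
- by move: (disjointFr dXY xX'); rewrite -yx' yY.
- by move: (disjointFr dXY xX); rewrite xy' yY'.
Qed.

Lemma Pset_SS (S : {set T}) : (#|Pset S S| <= 2 * eG e S S)%N.
Proof.
pose psi (p : T * T) := ([set p.2; p.1], (enum_rank p.1 < enum_rank p.2)%N).
have inj : {in Pset S S &, injective psi}.
  move=> [a b] [c d]; rewrite !inE /= => /and3P [_ _ eab] /and3P [_ _ ecd].
  rewrite /psi /= => -[h hr].
  have hab : a != b by apply/eqP => ab; move: eab; rewrite ab eirr.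
  have ha : a \in [set d; c] by rewrite -h !inE eqxx orbT.
  have hb : b \in [set d; c] by rewrite -h !inE eqxx.
  move: ha hb; rewrite !inE => /orP [/eqP ad|/eqP ac] /orP [/eqP bd|/eqP bc].
  - by move: hab; rewrite ad bd eqxx.
  - exfalso; move: hr; rewrite ad bc.
    case: (ltngtP (enum_rank d) (enum_rank c)) => // /val_inj/enum_rank_inj dc _.
    by move: hab; rewrite ad bc dc eqxx.
  - by rewrite ac bd.
  - by move: hab; rewrite ac bc eqxx.
rewrite -(card_in_imset inj).
have sub : psi @: Pset S S \subset setX (Eset e S S) [set b : bool | true].
  apply/subsetP => q /imsetP [p pP ->]; rewrite in_setX; apply/andP; split; last by rewrite inE.
  by rewrite Eset_im; apply/imsetP; exists p.
apply: (leq_trans (subset_leq_card sub)).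
rewrite cardsX /eG mulnC.
have -> : [set b : bool | true] = [set true; false] by apply/setP => b; rewrite !inE; case: b.
by rewrite cards2.
Qed.

Lemma Eset_sym (X Y : {set T}) : Eset e X Y = Eset e Y X.
Proof.
apply/setP => s; rewrite !inE; apply/existsP/existsP.
- case=> x /existsP [y /and4P [/eqP -> exy xX yY]].
  exists y; apply/existsP; exists x; by rewrite setUC eqxx esym exy xX yY.
- case=> x /existsP [y /and4P [/eqP -> exy xX yY]].
  exists y; apply/existsP; exists x; by rewrite setUC eqxx esym exy xX yY.
Qed.

Lemma eG_sym (X Y : {set T}) : eG e X Y = eG e Y X.
Proof. by rewrite /eG Eset_sym. Qed.

Lemma Eset_mono (X Y X' Y' : {set T}) : X \subset X' -> Y \subset Y' ->
  Eset e X Y \subset Eset e X' Y'.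
Proof.
move=> sX sY; apply/subsetP => s; rewrite !inE.
case/existsP => x /existsP [y /and4P [h exy xX yY]].
apply/existsP; exists x; apply/existsP; exists y.
by rewrite h exy (subsetP sX _ xX) (subsetP sY _ yY).
Qed.

Lemma eG_mono (X Y X' Y' : {set T}) : X \subset X' -> Y \subset Y' ->
  (eG e X Y <= eG e X' Y')%N.
Proof. by move=> sX sY; apply/subset_leq_card/Eset_mono. Qed.

Lemma deg_le (S : {set T}) (v : T) : (deg_in e S v <= #|S|)%N.
Proof. by apply/subset_leq_card/subsetP => u; rewrite inE => /andP []. Qed.

Lemma deg_mono (S S' : {set T}) (v : T) : S \subset S' -> (deg_in e S v <= deg_in e S' v)%N.
Proof.
move=> sS; apply/subset_leq_card/subsetP => u; rewrite !inE => /andP [uS ->].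
by rewrite (subsetP sS _ uS).
Qed.

Lemma deg_U (S1 S2 : {set T}) (v : T) : [disjoint S1 & S2] ->
  deg_in e (S1 :|: S2) v = (deg_in e S1 v + deg_in e S2 v)%N.
Proof.
move=> d; rewrite /deg_in.
have -> : [set u in S1 :|: S2 | e v u] = [set u in S1 | e v u] :|: [set u in S2 | e v u].
  by apply/setP => u; rewrite !inE; case: (u \in S1); case: (u \in S2); case: (e v u).
rewrite -cardsUI.
have -> : [set u in S1 | e v u] :&: [set u in S2 | e v u] = set0.
  apply/setP => u; rewrite !inE.
  case uS1: (u \in S1) => //=; by rewrite (disjointFr d uS1) andbF.
by rewrite cards0 addn0.
Qed.

Lemma sum_sub_deg (X Y Z : {set T}) : [disjoint X & Y] -> Z \subset Y ->
  (\sum_(y in Z) deg_in e X y <= eG e X Y)%N.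
Proof.
move=> d sZ; rewrite eG_disj // -sum_deg.
rewrite [X in (_ <= X)%N](big_setID Z) /= (setIidPr sZ).
by apply: leq_addr.
Qed.

Lemma sum_self_deg (S : {set T}) : (\sum_(v in S) deg_in e S v <= 2 * eG e S S)%N.
Proof. by rewrite sum_deg Pset_SS. Qed.

Lemma card_bigcup (I : finType) (A : {pred I}) (F : I -> {set T}) :
  (#|\bigcup_(i in A) F i| <= \sum_(i in A) #|F i|)%N.
Proof.
apply: (big_ind2 (fun (B : {set T}) n => #|B| <= n)%N).
- by rewrite cards0.
- move=> B1 n1 B2 n2 h1 h2; apply: (leq_trans (leq_card_setU _ _)).
  exact: leq_add.
- by [].
Qed.

Lemma part_card (I : finType) (P : I -> {set T}) :
  (forall p q, p != q -> [disjoint P p & P q]) ->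
  (forall x, exists p, x \in P p) ->
  forall S : {set T}, #|S| = (\sum_p #|S :&: P p|)%N.
Proof.
move=> dis cov S.
rewrite -sum1_card.
have -> : (\sum_p #|S :&: P p| = \sum_p \sum_(u in S) (u \in P p : nat))%N.
  apply: eq_bigr => p _; rewrite -sum1_card big_mkcond /= [RHS]big_mkcond /=.
  by apply: eq_bigr => u _; rewrite !inE; case: (u \in S); case: (u \in P p).
rewrite exchange_big /=; apply: eq_bigr => u _.
have [p0 up0] := cov u.
rewrite (bigD1 p0) //= up0 big1 // => q qp0.
case uq: (u \in P q) => //.
have dq : p0 != q by rewrite eq_sym.
by move: (disjointFr (dis p0 q dq) up0); rewrite uq.
Qed.

End Comb.


Section Main.
Variables (R : realType) (T : finType) (e : rel T).
Hypothesis esym : symmetric e.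
Hypothesis eirr : irreflexive e.

Lemma sum_lb (A : {set T}) (g : T -> nat) (c : R) :
  (forall x, x \in A -> c <= (g x)%:R) ->
  #|A|%:R * c <= ((\sum_(x in A) g x)%N)%:R.
Proof.
move=> h; rewrite natr_sum mulr_natl -sumr_const.
by apply: ler_sum => x xA; apply: h.
Qed.

Lemma cutU (X X1 X2 : {set T}) : X1 :|: X2 = X -> [disjoint X1 & X2] ->
  forall v, deg_in e X v = (deg_in e X1 v + deg_in e X2 v)%N.
Proof. by move=> <- d v; rewrite deg_U. Qed.

Lemma cardU (X X1 X2 : {set T}) : X1 :|: X2 = X -> [disjoint X1 & X2] ->
  #|X| = (#|X1| + #|X2|)%N.
Proof.
move=> <- d; rewrite -cardsUI.
suff -> : X1 :&: X2 = set0 by rewrite cards0 addn0.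
apply/setP => u; rewrite !inE; case u1 : (u \in X1) => //=.
by rewrite (disjointFr d u1).
Qed.

Lemma small_cut (n : nat) (delta zeta : R) (X X1 X2 : {set T}) :
  0 < n%:R :> R -> 0 < zeta ->
  X1 :|: X2 = X -> [disjoint X1 & X2] -> X1 != set0 -> (#|X2| <= n)%N ->
  (forall x, x \in X -> delta * n%:R <= (deg_in e X x)%:R) ->
  #|X1|%:R <= delta * n%:R / 2 -> zeta < delta / 2 -> ~ sparse_cut e zeta X1 X2.
Proof.
move=> n0 z0 U d ne X2n hdeg s1 hz sp.
have lb : forall x, x \in X1 -> delta * n%:R / 2 <= (deg_in e X2 x)%:R.
  move=> x x1.
  have hx : x \in X by rewrite -U inE x1.
  have := hdeg x hx; rewrite (cutU U d) natrD.
  have := deg_le e X1 x; rewrite -(ler_nat R) => h1.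
  lra.
have := sum_lb lb.
have d' : [disjoint X2 & X1] by rewrite disjoint_sym.
have := sum_sub_deg esym d' (subxx X1).
rewrite -(ler_nat R) eG_sym // => h2 h1.
move: sp; rewrite /sparse_cut => sp.
have a0 : 0 < #|X1|%:R :> R by rewrite ltr0n lt0n cards_eq0.
have bn : #|X2|%:R <= n%:R :> R by rewrite ler_nat.
set a := #|X1|%:R in a0 h1 sp s1; set b := #|X2|%:R in bn sp.
set E := (eG e X1 X2)%:R in h2 sp.
set S := ((\sum_(_ in _) _)%N)%:R in h1 h2.
have h3 : zeta * a * b <= zeta * a * n%:R by apply: ler_wpM2l => //; nra.
have h4 : a * (delta * n%:R / 2) <= a * (zeta * n%:R) by nra.
have h5 : delta * n%:R / 2 <= zeta * n%:R by rewrite -(ler_pM2l a0).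
nra.
Qed.

Lemma card_sub2 (Z A1 A2 : {set T}) : Z \subset A1 :|: A2 -> (#|Z| <= #|A1| + #|A2|)%N.
Proof.
move=> h; apply: (leq_trans (subset_leq_card h)); exact: leq_card_setU.
Qed.

Lemma RN_sub (Hs : {set T}) (nu : R) S : RN e Hs nu S \subset Hs.
Proof. by apply/subsetP => v; rewrite inE => /andP []. Qed.

Lemma exp_cut (n : nat) (delta nu tau zeta : R) (X X1 X2 : {set T}) :
  0 < n%:R :> R -> 0 < zeta -> 0 < tau -> 0 <= nu ->
  X1 :|: X2 = X -> [disjoint X1 & X2] -> (#|X| <= n)%N ->
  robust_expander e X nu tau -> tau <= delta / 2 ->
  delta * n%:R / 2 < #|X1|%:R -> delta * n%:R / 2 < #|X2|%:R ->
  zeta < nu * nu -> ~ sparse_cut e zeta X1 X2.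
Proof.
move=> n0 z0 t0 nu0 U d Xn exp htd h1 h2 hz sp.
have cU := cardU U d.
have sX1 : X1 \subset X by rewrite -U subsetUl.
have hN : #|X|%:R = #|X1|%:R + #|X2|%:R :> R by rewrite cU natrD.
have Nn : #|X|%:R <= n%:R :> R by rewrite ler_nat.
set N := #|X|%:R in hN Nn exp *.
set a := #|X1|%:R in hN h1 sp *; set b := #|X2|%:R in hN h2 sp *.
have e1 := exp X1 sX1.
have e2 : tau * N <= a by nra.
have e3 : a <= (1 - tau) * N by nra.
have {e1 e2 e3} e1 := e1 e2 e3.
set Z := RN e X nu X1 in e1.
have cZ : (#|Z| <= #|X1| + #|Z :&: X2|)%N.
  apply: card_sub2; apply/subsetP => v vZ.
  have : v \in X1 :|: X2 by rewrite U; apply: (subsetP (RN_sub X nu X1)).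
  rewrite in_setU => /orP [h|h]; by rewrite in_setU in_setI vZ h ?orbT.
have cZ' : #|Z|%:R <= a + #|Z :&: X2|%:R :> R by rewrite -natrD ler_nat.
have lb : forall y, y \in Z :&: X2 -> nu * N <= (deg_in e X1 y)%:R.
  by move=> y; rewrite !inE => /andP [/andP [_ h] _].
have s1 := sum_lb lb.
have s2 := sum_sub_deg esym d (subsetIr Z X2).
move: s2; rewrite -(ler_nat R) => s2.
move: sp; rewrite /sparse_cut => sp.
set c := #|Z :&: X2|%:R in cZ' s1.
set E := (eG e X1 X2)%:R in sp s2.
set S := ((\sum_(_ in _) _)%N)%:R in s1 s2.
have a0 : 0 <= a by rewrite ler0n.
have b0 : 0 <= b by rewrite ler0n.
have N0 : 0 < N by nra.
have c1 : nu * N <= c by lra.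
have c2 : (nu * N) * (nu * N) <= c * (nu * N) by apply: ler_wpM2r; nra.
have c3 : zeta * a * b <= zeta * N * N.
  rewrite -!mulrA; apply: ler_wpM2l; first lra.
  apply: ler_pM => //; lra.
have c4 : zeta * (N * N) < nu * nu * (N * N) by rewrite ltr_pM2r //; nra.
nra.
Qed.

Lemma eG_lb (X1 X2 Z : {set T}) (c : R) : [disjoint X1 & X2] -> Z \subset X2 ->
  (forall y, y \in Z -> c <= (deg_in e X1 y)%:R) -> #|Z|%:R * c <= (eG e X1 X2)%:R.
Proof.
move=> d sZ h; apply: (le_trans (sum_lb h)).
by rewrite ler_nat; apply: sum_sub_deg.
Qed.

Lemma sparse_contra (zeta L N : R) (X1 X2 : {set T}) : 0 <= zeta ->
  L <= (eG e X1 X2)%:R -> zeta * N * N < L -> #|X1|%:R <= N -> #|X2|%:R <= N ->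
  ~ sparse_cut e zeta X1 X2.
Proof.
move=> z0 hL hN h1 h2; rewrite /sparse_cut => sp.
have a0 : 0 <= #|X1|%:R :> R by rewrite ler0n.
have b0 : 0 <= #|X2|%:R :> R by rewrite ler0n.
have ab : #|X1|%:R * #|X2|%:R <= N * N by apply: ler_pM.
have : zeta * (#|X1|%:R * #|X2|%:R) <= zeta * (N * N) by apply: ler_wpM2l.
rewrite !mulrA; lra.
Qed.

Lemma disjI (X1 X2 A B : {set T}) : [disjoint X1 & X2] -> [disjoint X1 :&: A & X2 :&: B].
Proof.
move=> d; rewrite -setI_eq0; apply/eqP/setP => x; rewrite !inE.
case x1 : (x \in X1) => //=.
by rewrite (disjointFr d x1) andbF.
Qed.

Lemma splitI (X1 X2 Y : {set T}) : Y \subset X1 :|: X2 -> (X1 :&: Y) :|: (X2 :&: Y) = Y.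
Proof.
move=> sY; apply/setP => x; rewrite !inE.
case xY : (x \in Y); last by rewrite !andbF.
by rewrite !andbT; move: (subsetP sY x xY); rewrite inE.
Qed.

End Main.

Section Bip.
Variables (R : realType) (T : finType) (e : rel T).
Hypothesis esym : symmetric e.
Hypothesis eirr : irreflexive e.

Lemma bip_small (n : nat) (delta tau zeta : R) (A B X1 X2 : {set T}) :
  0 < n%:R :> R -> 0 < zeta -> 0 < tau -> [disjoint A & B] ->
  X1 :|: X2 = A :|: B -> [disjoint X1 & X2] -> (#|A :|: B| <= n)%N ->
  (forall y, y \in B -> (deg_in e B y <= deg_in e A y)%N) ->
  (forall x, x \in A :|: B -> delta * n%:R <= (deg_in e (A :|: B) x)%:R) ->
  #|X1 :&: A|%:R < tau * #|A|%:R -> delta * n%:R / 2 < #|X1|%:R ->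
  tau <= delta / 4 -> zeta * 16 < delta * delta -> ~ sparse_cut e zeta X1 X2.
Proof.
move=> n0 z0 t0 dAB U d Wn hB hdeg hS1 hX1 htd hz.
have An : #|A|%:R <= n%:R :> R.
  by rewrite ler_nat; apply: leq_trans Wn; apply: subset_leq_card; apply: subsetUl.
have X2n : #|X2|%:R <= n%:R :> R.
  by rewrite ler_nat; apply: leq_trans Wn; apply: subset_leq_card; rewrite -U subsetUr.
have X1n : #|X1|%:R <= n%:R :> R.
  by rewrite ler_nat; apply: leq_trans Wn; apply: subset_leq_card; rewrite -U subsetUl.
have sX1 : X1 \subset A :|: B by rewrite -U subsetUl.
have cX1 : #|X1| = (#|X1 :&: A| + #|X1 :&: B|)%N.
  have dd : [disjoint X1 :&: A & X1 :&: B] by rewrite (setIC X1 A) (setIC X1 B); apply: disjI.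
  apply: cardU dd.
  by rewrite (setIC X1 A) (setIC X1 B) splitI.
have sA : A \subset X1 :|: X2 by rewrite U subsetUl.
have UA := splitI sA.
have dA : [disjoint X1 :&: A & X2 :&: A] by apply: disjI.
have lb : forall y, y \in X1 :&: B -> delta * n%:R / 4 <= (deg_in e X2 y)%:R.
  move=> y; rewrite inE => /andP [y1 yB].
  have yW : y \in A :|: B by rewrite inE yB orbT.
  have h1 := hdeg y yW; rewrite (deg_U _ _ dAB) natrD in h1.
  have h2 := hB y yB; rewrite -(ler_nat R) in h2.
  have h3 : (deg_in e A y)%:R = (deg_in e (X1 :&: A) y)%:R + (deg_in e (X2 :&: A) y)%:R :> R by rewrite (cutU e UA dA y) natrD.
  have h4 := deg_le e (X1 :&: A) y; rewrite -(ler_nat R) in h4.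
  have h5 := deg_mono e y (subsetIl X2 A); rewrite -(ler_nat R) in h5.
  nra.
have d' : [disjoint X2 & X1] by rewrite disjoint_sym.
have L := eG_lb esym d' (subsetIl X1 B) lb.
rewrite eG_sym // in L.
apply: (sparse_contra (N := n%:R)) L _ X1n X2n; first lra.
have : delta * n%:R / 4 < #|X1 :&: B|%:R.
  move: hX1; rewrite cX1 natrD; nra.
set c := #|X1 :&: B|%:R => hc.
have dn : 0 < delta * n%:R by nra.
nra.
Qed.

Lemma sum_subset_le (M A : {set T}) (g : T -> nat) : M \subset A ->
  (\sum_(v in M) g v <= \sum_(v in A) g v)%N.
Proof.
move=> sM; rewrite [X in (_ <= X)%N](big_setID M) /= (setIidPr sM).
exact: leq_addr.
Qed.

Lemma RN_cover (W A B X1 X2 S : {set T}) (nu : R) (M : {set T}) :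
  W = A :|: B -> X1 :|: X2 = W -> S \subset A ->
  M = [set v in A | nu * #|W|%:R <= (deg_in e A v)%:R] ->
  RN e W nu S \subset M :|: ((X1 :&: B) :|: (RN e W nu S :&: (X2 :&: B))).
Proof.
move=> hW U sS hM; apply/subsetP => v vZ.
have := vZ; rewrite inE => /andP [vW hv].
have : v \in A :|: B by rewrite -hW.
rewrite inE => /orP [vA|vB].
- rewrite in_setU; apply/orP; left; rewrite hM inE vA /=.
  apply: (le_trans hv); rewrite ler_nat; exact: deg_mono.
- have : v \in X1 :|: X2 by rewrite U.
  rewrite inE => /orP [v1|v2].
  + by rewrite !in_setU in_setI v1 vB orbT.
  + by rewrite !in_setU !in_setI vZ v2 vB !orbT.
Qed.

Lemma bip_large (n : nat) (rho nu tau zeta delta : R) (A B X1 X2 : {set T}) :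
  0 < n%:R :> R -> 0 < zeta -> 0 < nu -> 0 < rho -> 0 < delta -> [disjoint A & B] ->
  X1 :|: X2 = A :|: B -> [disjoint X1 & X2] ->
  bip_robust_expander e A B nu tau ->
  tau * #|A|%:R <= #|X1 :&: A|%:R -> tau * #|A|%:R <= #|X2 :&: A|%:R ->
  (eG e A A)%:R <= rho * n%:R ^+ 2 ->
  #|B|%:R <= #|A|%:R + rho * n%:R ->
  delta * n%:R <= #|A :|: B|%:R ->
  8 * rho <= nu * nu * (delta * delta) -> 2 * rho <= nu * delta -> zeta * 2 < nu * nu ->
  ~ sparse_cut e zeta X1 X2.
Proof.
move=> n0 z0 nu0 r0 d0 dAB U d bexp ha1 ha2 eAA hBA hN hr1 hr2 hz.
set W := A :|: B in U hN.
have sA : A \subset X1 :|: X2 by rewrite U subsetUl.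
have sB : B \subset X1 :|: X2 by rewrite U subsetUr.
have cA : #|A|%:R = #|X1 :&: A|%:R + #|X2 :&: A|%:R :> R.
  by rewrite -natrD (cardU (splitI sA) (disjI _ _ d)).
have cB : #|B|%:R = #|X1 :&: B|%:R + #|X2 :&: B|%:R :> R.
  by rewrite -natrD (cardU (splitI sB) (disjI _ _ d)).
have cW : #|W|%:R = #|A|%:R + #|B|%:R :> R.
  by rewrite -natrD (cardU (erefl W) dAB).
have X1W : #|X1|%:R <= #|W|%:R :> R.
  by rewrite ler_nat; apply: subset_leq_card; rewrite -U subsetUl.
have X2W : #|X2|%:R <= #|W|%:R :> R.
  by rewrite ler_nat; apply: subset_leq_card; rewrite -U subsetUr.
set N := #|W|%:R in cW X1W X2W hN *.
have e1 : #|X1 :&: A|%:R <= (1 - tau) * #|A|%:R by lra.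
have e2 : #|X2 :&: A|%:R <= (1 - tau) * #|A|%:R by lra.
have x1 := bexp _ (subsetIr X1 A) ha1 e1.
have x2 := bexp _ (subsetIr X2 A) ha2 e2.
rewrite -/W -/N in x1 x2.
pose M := [set v in A | nu * N <= (deg_in e A v)%:R].
have hM : #|M|%:R * (nu * N) <= 2 * rho * n%:R ^+ 2.
  have lb : forall v, v \in M -> nu * N <= (deg_in e A v)%:R.
    by move=> v; rewrite inE => /andP [].
  apply: (le_trans (sum_lb lb)).
  have sM : M \subset A by apply/subsetP => v; rewrite inE => /andP [].
  have h1 := sum_subset_le (deg_in e A) sM.
  have h2 := sum_self_deg esym eirr A.
  have h3 := leq_trans h1 h2.
  rewrite -(ler_nat R) natrM in h3.
  apply: (le_trans h3); lra.
have s1 := RN_cover (nu:=nu) (M:=M) (W:=W) (erefl _) U (subsetIr X1 A) (erefl _).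
have UU : X2 :|: X1 = W by rewrite setUC.
have s2 := RN_cover (nu:=nu) (M:=M) (W:=W) (erefl _) UU (subsetIr X2 A) (erefl _).
set Z1 := RN e W nu (X1 :&: A) in s1 x1.
set Z2 := RN e W nu (X2 :&: A) in s2 x2.
have c1 := leq_trans (card_sub2 s1) (leq_add (leqnn _) (leq_card_setU _ _)).
have c2 := leq_trans (card_sub2 s2) (leq_add (leqnn _) (leq_card_setU _ _)).
move: c1 c2; rewrite -(ler_nat R) !natrD => c1; rewrite -(ler_nat R) !natrD => c2.
have lb1 : forall y, y \in Z1 :&: (X2 :&: B) -> nu * N <= (deg_in e X1 y)%:R.
  move=> y; rewrite inE => /andP [yZ _]; move: yZ; rewrite inE => /andP [_ h].
  apply: (le_trans h); rewrite ler_nat; apply: deg_mono; exact: subsetIl.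
have lb2 : forall y, y \in Z2 :&: (X1 :&: B) -> nu * N <= (deg_in e X2 y)%:R.
  move=> y; rewrite inE => /andP [yZ _]; move: yZ; rewrite inE => /andP [_ h].
  apply: (le_trans h); rewrite ler_nat; apply: deg_mono; exact: subsetIl.
have sub1 : Z1 :&: (X2 :&: B) \subset X2 by apply/subsetP => y; rewrite !inE => /and3P [].
have sub2 : Z2 :&: (X1 :&: B) \subset X1 by apply/subsetP => y; rewrite !inE => /and3P [].
have d' : [disjoint X2 & X1] by rewrite disjoint_sym.
have L1 := eG_lb esym d sub1 lb1.
have L2 := eG_lb esym d' sub2 lb2.
rewrite eG_sym // in L2.
set k1 := #|Z1 :&: (X2 :&: B)|%:R in c1 L1.
set k2 := #|Z2 :&: (X1 :&: B)|%:R in c2 L2.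
set m := #|M|%:R in hM c1 c2.
have N0 : 0 < N.
  have : 0 < delta * n%:R by apply: mulr_gt0.
  lra.
have nN : 0 < nu * N by apply: mulr_gt0.
have q0 : delta * n%:R * (delta * n%:R) <= N * N.
  have : 0 <= delta * n%:R by apply: mulr_ge0; lra.
  move=> h; apply: ler_pM => //.
have q1 : 8 * rho * n%:R ^+ 2 <= nu * nu * (N * N).
  have : 8 * rho * n%:R ^+ 2 <= nu * nu * (delta * delta) * n%:R ^+ 2.
    by apply: ler_wpM2r => //; apply: exprn_ge0; lra.
  move=> h; apply: (le_trans h).
  have -> : nu * nu * (delta * delta) * n%:R ^+ 2 = nu * nu * (delta * n%:R * (delta * n%:R)).
    by rewrite expr2; ring.
  apply: ler_wpM2l => //; nra.
have q2 : m * (nu * N) <= (nu * N / 4) * (nu * N) by nra.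
have q3 : m <= nu * N / 4 by rewrite -(ler_pM2r nN).
have q4 : rho * n%:R <= nu * N / 2.
  have : 2 * rho * n%:R <= nu * delta * n%:R by apply: ler_wpM2r; lra.
  have : nu * (delta * n%:R) <= nu * N by apply: ler_wpM2l; lra.
  rewrite !mulrA; lra.
have k12 : nu * N <= k1 + k2 by lra.
have zN : zeta * N * N < nu * N / 2 * (nu * N).
  have : zeta * (N * N) < (nu * nu / 2) * (N * N) by rewrite ltr_pM2r; [lra|nra].
  rewrite !mulrA; lra.
case: (lerP (nu * N / 2) k1) => hk.
- apply: (sparse_contra _ L1 _ X1W X2W); first lra.
  have : nu * N / 2 * (nu * N) <= k1 * (nu * N) by apply: ler_wpM2r; lra.
  lra.
- apply: (sparse_contra _ L2 _ X1W X2W); first lra.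
  have : nu * N / 2 * (nu * N) <= k2 * (nu * N) by apply: ler_wpM2r; lra.
  lra.
Qed.

End Bip.

Section Far.
Variables (R : realType) (T : finType) (e : rel T).
Hypothesis esym : symmetric e.
Hypothesis eirr : irreflexive e.

Lemma Eset_nc (V S X Y : {set T}) : S \subset V -> [disjoint S & X] ->
  Eset e S S \subset Eset e V V :\: Eset e X Y.
Proof.
move=> sS d; apply/subsetP => s sE; rewrite in_setD; apply/andP; split; last first.
  by move: s sE; apply/subsetP; apply: Eset_mono.
apply/negP.
move: sE; rewrite !inE => /existsP [a /existsP [b /and4P [/eqP -> _ aS bS]]].
case/existsP => x /existsP [y /and4P [/eqP h _ xX _]].
have : x \in [set a; b] by rewrite h !inE eqxx.
rewrite !inE => /orP [/eqP xa|/eqP xb].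
- by move: (disjointFr d aS); rewrite -xa xX.
- by move: (disjointFr d bS); rewrite -xb xX.
Qed.

Lemma small_side (n : nat) (delta tau : R) (V X Y : {set T}) :
  0 < n%:R :> R -> 0 < delta -> X :|: Y = V -> [disjoint X & Y] -> (#|V| <= n)%N ->
  (forall x, x \in V -> delta * n%:R <= (deg_in e V x)%:R) ->
  delta * n%:R <= #|V|%:R -> tau <= delta / 2 -> 0 < tau ->
  #|X|%:R < tau * #|V|%:R ->
  delta * delta * n%:R ^+ 2 / 8 <= (eG e Y Y)%:R.
Proof.
move=> n0 d0 U d Vn hdeg hV htd t0 hX.
have Nn : #|V|%:R <= n%:R :> R by rewrite ler_nat.
have cV : #|V|%:R = #|X|%:R + #|Y|%:R :> R by rewrite -natrD (cardU U d).
have lb : forall v, v \in Y -> delta * n%:R / 2 <= (deg_in e Y v)%:R.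
  move=> v vY.
  have vV : v \in V by rewrite -U inE vY orbT.
  have h1 := hdeg v vV.
  have h2 : (deg_in e V v)%:R = (deg_in e X v)%:R + (deg_in e Y v)%:R :> R.
    by rewrite (cutU e U d v) natrD.
  have h3 := deg_le e X v; rewrite -(ler_nat R) in h3.
  have : tau * #|V|%:R <= tau * n%:R by apply: ler_wpM2l; lra.
  nra.
have s1 := sum_lb lb.
have s2 := sum_self_deg esym eirr Y; rewrite -(ler_nat R) natrM in s2.
have hY : delta * n%:R / 2 <= #|Y|%:R.
  have : tau * #|V|%:R <= #|V|%:R / 2.
    have : delta <= 1.
      have : delta * n%:R <= 1 * n%:R by lra.
      by rewrite ler_pM2r.
    move=> d1; have : 0 <= #|V|%:R :> R by rewrite ler0n.
    nra.
  lra.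
have : delta * n%:R / 2 * (delta * n%:R / 2) <= #|Y|%:R * (delta * n%:R / 2).
  apply: ler_wpM2r => //; nra.
move: s1 s2; set S := ((\sum_(_ in _) _)%N)%:R; set E := (eG e Y Y)%:R.
move=> s1 s2 h.
have -> : delta * delta * n%:R ^+ 2 / 8 = delta * n%:R / 2 * (delta * n%:R / 2) / 2.
  by rewrite expr2; field.
lra.
Qed.

Lemma big_side (nu : R) (V X : {set T}) :
  0 <= nu -> X \subset V ->
  nu * #|V|%:R <= #|RN e V nu X :&: X|%:R ->
  nu * #|V|%:R * (nu * #|V|%:R) / 2 <= (eG e X X)%:R.
Proof.
move=> nu0 sX h.
have lb : forall v, v \in RN e V nu X :&: X -> nu * #|V|%:R <= (deg_in e X v)%:R.
  by move=> v; rewrite !inE => /andP [/andP [_ ->] _].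
have s1 := sum_lb lb.
have s2 := sum_subset_le (deg_in e X) (subsetIr (RN e V nu X) X).
have s3 := leq_trans s2 (sum_self_deg esym eirr X).
rewrite -(ler_nat R) natrM in s3.
have : nu * #|V|%:R * (nu * #|V|%:R) <= #|RN e V nu X :&: X|%:R * (nu * #|V|%:R).
  apply: ler_wpM2r => //; apply: mulr_ge0 => //; by rewrite ler0n.
move: s1 s3; set S := ((\sum_(_ in _) _)%N)%:R; set E := (eG e X X)%:R.
lra.
Qed.

Lemma far_V (n : nat) (delta nu tau gamma : R) (V : {set T}) (x0 : T) :
  0 < n%:R :> R -> 0 < nu -> 0 < tau -> 0 < delta -> tau <= delta / 2 ->
  (#|V| <= n)%N -> x0 \in V -> robust_expander e V nu tau ->
  (forall x, x \in V -> delta * n%:R <= (deg_in e V x)%:R) ->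
  gamma * 2 < nu * nu * (delta * delta) -> gamma * 8 < delta * delta ->
  far_from_bipartite e n gamma V.
Proof.
move=> n0 nu0 t0 d0 htd Vn x0V exp hdeg hg1 hg2 X Y [U d].
rewrite /non_cross_edges.
have hV : delta * n%:R <= #|V|%:R.
  apply: (le_trans (hdeg x0 x0V)); rewrite ler_nat; exact: deg_le.
have sX : X \subset V by rewrite -U subsetUl.
have sY : Y \subset V by rewrite -U subsetUr.
have d' : [disjoint Y & X] by rewrite disjoint_sym.
have ncX : (eG e X X <= #|Eset e V V :\: Eset e X Y|)%N.
  apply: subset_leq_card; rewrite (Eset_sym esym X Y); exact: Eset_nc.
have ncY : (eG e Y Y <= #|Eset e V V :\: Eset e X Y|)%N.
  apply: subset_leq_card; exact: Eset_nc.
rewrite -(ler_nat R) in ncX; rewrite -(ler_nat R) in ncY.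
set nc := (#|_|)%:R in ncX ncY *.
have n2 : 0 < n%:R ^+ 2 :> R by apply: exprn_gt0.
have g1 : gamma * n%:R ^+ 2 < delta * delta * n%:R ^+ 2 / 8.
  have : gamma * n%:R ^+ 2 < (delta * delta / 8) * n%:R ^+ 2 by rewrite ltr_pM2r //; lra.
  by rewrite mulrAC.
have U' : Y :|: X = V by rewrite setUC.
case: (ltrP #|X|%:R (tau * #|V|%:R)) => hX.
  have := small_side n0 d0 U d Vn hdeg hV htd t0 hX; lra.
case: (ltrP #|Y|%:R (tau * #|V|%:R)) => hY.
  have := small_side n0 d0 U' d' Vn hdeg hV htd t0 hY; lra.
have cV : #|V|%:R = #|X|%:R + #|Y|%:R :> R by rewrite -natrD (cardU U d).
have x1 := exp X sX hX; have x2 := exp Y sY hY.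
have {x1} x1 := x1 ltac:(lra). have {x2} x2 := x2 ltac:(lra).
have cX : (#|RN e V nu X| <= #|RN e V nu X :&: X| + #|Y|)%N.
  apply: card_sub2; apply/subsetP => v vZ.
  have : v \in X :|: Y by rewrite U; apply: (subsetP (RN_sub e V nu X)).
  rewrite inE => /orP [h|h]; by rewrite in_setU in_setI vZ h ?orbT.
have cY : (#|RN e V nu Y| <= #|RN e V nu Y :&: Y| + #|X|)%N.
  apply: card_sub2; apply/subsetP => v vZ.
  have : v \in X :|: Y by rewrite U; apply: (subsetP (RN_sub e V nu Y)).
  rewrite inE => /orP [h|h]; by rewrite in_setU in_setI vZ h ?orbT.
rewrite -(ler_nat R) natrD in cX; rewrite -(ler_nat R) natrD in cY.
set N := #|V|%:R in hV cV x1 x2 cX cY *.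
have g2 : gamma * n%:R ^+ 2 < nu * N * (nu * N) / 2.
  have q : delta * n%:R * (delta * n%:R) <= N * N.
    apply: ler_pM => //; apply: mulr_ge0; lra.
  have : gamma * n%:R ^+ 2 < (nu * nu * (delta * delta) / 2) * n%:R ^+ 2 by rewrite ltr_pM2r //; lra.
  have : nu * nu * (delta * n%:R * (delta * n%:R)) <= nu * nu * (N * N) by apply: ler_wpM2l; nra.
  have -> : nu * N * (nu * N) / 2 = nu * nu * (N * N) / 2 by ring.
  have -> : nu * nu * (delta * delta) / 2 * n%:R ^+ 2 = nu * nu * (delta * n%:R * (delta * n%:R)) / 2.
    by rewrite expr2; ring.
  lra.
case: (lerP (nu * N) #|RN e V nu X :&: X|%:R) => h.
  have := big_side (ltW nu0) sX h; lra.
have h' : nu * N <= #|RN e V nu Y :&: Y|%:R by lra.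
have := big_side (ltW nu0) sY h'; lra.
Qed.

End Far.

Section Cuts.
Variables (R : realType) (T : finType) (e : rel T).
Hypothesis esym : symmetric e.
Hypothesis eirr : irreflexive e.

Lemma sparse_sym (zeta : R) (X1 X2 : {set T}) :
  sparse_cut e zeta X1 X2 -> sparse_cut e zeta X2 X1.
Proof. by rewrite /sparse_cut eG_sym // mulrAC. Qed.

Lemma cutV (n : nat) (delta nu tau zeta : R) (X X1 X2 : {set T}) :
  0 < n%:R :> R -> 0 < zeta -> 0 < tau -> 0 < nu -> 0 < delta -> delta < 1 ->
  X1 :|: X2 = X -> [disjoint X1 & X2] -> X1 != set0 -> X2 != set0 ->
  (#|X| <= n)%N -> robust_expander e X nu tau ->
  (forall x, x \in X -> delta * n%:R <= (deg_in e X x)%:R) ->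
  tau <= delta / 4 -> zeta * 16 < delta * delta -> zeta * 2 < nu * nu ->
  ~ sparse_cut e zeta X1 X2.
Proof.
move=> n0 z0 t0 nu0 d0 d1 U d ne1 ne2 Xn exp hdeg htd hz1 hz2.
have zd : zeta < delta / 2 by nra.
have cn : forall S : {set T}, S \subset X -> (#|S| <= n)%N.
  by move=> S sS; apply: leq_trans Xn; apply: subset_leq_card.
have U' : X2 :|: X1 = X by rewrite setUC.
have d' : [disjoint X2 & X1] by rewrite disjoint_sym.
case: (lerP #|X1|%:R (delta * n%:R / 2)) => h1.
  by apply: (small_cut esym n0 z0 U d ne1 (cn _ _) hdeg h1 zd); rewrite -U subsetUr.
case: (lerP #|X2|%:R (delta * n%:R / 2)) => h2.
  move=> sp; apply: (small_cut esym n0 z0 U' d' ne2 (cn _ _) hdeg h2 zd (sparse_sym sp)).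
  by rewrite -U subsetUl.
apply: (exp_cut esym n0 z0 t0 (ltW nu0) U d Xn exp _ h1 h2); last by lra.
lra.
Qed.

Lemma cutW (n : nat) (rho delta nu tau zeta : R) (A B X1 X2 : {set T}) :
  0 < n%:R :> R -> 0 < zeta -> 0 < tau -> 0 < nu -> 0 < rho -> 0 < delta -> delta < 1 ->
  [disjoint A & B] ->
  X1 :|: X2 = A :|: B -> [disjoint X1 & X2] -> X1 != set0 -> X2 != set0 ->
  (#|A :|: B| <= n)%N -> bip_robust_expander e A B nu tau ->
  (forall y, y \in B -> (deg_in e B y <= deg_in e A y)%N) ->
  (forall x, x \in A :|: B -> delta * n%:R <= (deg_in e (A :|: B) x)%:R) ->
  (eG e A A)%:R <= rho * n%:R ^+ 2 ->
  #|B|%:R <= #|A|%:R + rho * n%:R ->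
  tau <= delta / 4 -> 8 * rho <= nu * nu * (delta * delta) -> 2 * rho <= nu * delta ->
  zeta * 16 < delta * delta -> zeta * 2 < nu * nu ->
  ~ sparse_cut e zeta X1 X2.
Proof.
move=> n0 z0 t0 nu0 r0 d0 d1 dAB U d ne1 ne2 Wn bexp hB hdeg eAA hBA htd hr1 hr2 hz1 hz2.
have zd : zeta < delta / 2 by nra.
have cn : forall S : {set T}, S \subset A :|: B -> (#|S| <= n)%N.
  by move=> S sS; apply: leq_trans Wn; apply: subset_leq_card.
have U' : X2 :|: X1 = A :|: B by rewrite setUC.
have d' : [disjoint X2 & X1] by rewrite disjoint_sym.
case: (lerP #|X1|%:R (delta * n%:R / 2)) => h1.
  by apply: (small_cut esym n0 z0 U d ne1 (cn _ _) hdeg h1 zd); rewrite -U subsetUr.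
case: (lerP #|X2|%:R (delta * n%:R / 2)) => h2.
  move=> sp; apply: (small_cut esym n0 z0 U' d' ne2 (cn _ _) hdeg h2 zd (sparse_sym sp)).
  by rewrite -U subsetUl.
case: (ltrP #|X1 :&: A|%:R (tau * #|A|%:R)) => a1.
  exact: (bip_small esym n0 z0 t0 dAB U d Wn hB hdeg a1 h1 htd hz1).
case: (ltrP #|X2 :&: A|%:R (tau * #|A|%:R)) => a2.
  move=> sp; exact: (bip_small esym n0 z0 t0 dAB U' d' Wn hB hdeg a2 h2 htd hz1 (sparse_sym sp)).
have x0 : exists x, x \in A :|: B.
  by case/set0Pn: ne1 => x xX; exists x; rewrite -U inE xX.
case: x0 => x xW.
have hN : delta * n%:R <= #|A :|: B|%:R.
  apply: (le_trans (hdeg x xW)); rewrite ler_nat; exact: deg_le.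
exact: (bip_large esym eirr n0 z0 nu0 r0 d0 dAB U d bexp a1 a2 eAA hBA hN hr1 hr2 hz2).
Qed.

Lemma almW (n : nat) (rho beta : R) (A B : {set T}) :
  [disjoint A & B] ->
  ((eG e A (~: B) + eG e B (~: A))%N)%:R <= rho * n%:R ^+ 2 -> rho <= beta ->
  almost_bipartite_with e n beta (A :|: B) A B.
Proof.
move=> dAB hE hb; split; first by split.
rewrite /non_cross_edges.
have sub : Eset e (A :|: B) (A :|: B) :\: Eset e A B \subset Eset e A (~: B) :|: Eset e B (~: A).
  apply/subsetP => s; rewrite in_setD => /andP [nAB].
  rewrite inE => /existsP [x /existsP [y /and4P [/eqP hs exy xW yW]]].
  move: xW yW; rewrite !in_setU => /orP [xA|xB] /orP [yA|yB].
  - apply/orP; left; rewrite inE; apply/existsP; exists x; apply/existsP; exists y.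
    by rewrite hs eqxx exy xA inE (disjointFr dAB yA).
  - exfalso; move/negP: nAB; apply; rewrite inE; apply/existsP; exists x; apply/existsP; exists y.
    by rewrite hs eqxx exy xA yB.
  - exfalso; move/negP: nAB; apply; rewrite inE; apply/existsP; exists y; apply/existsP; exists x.
    by rewrite hs setUC eqxx esym exy yA xB.
  - apply/orP; right; rewrite inE; apply/existsP; exists x; apply/existsP; exists y.
    by rewrite hs eqxx exy xB inE (disjointFl dAB yB).
have c := leq_trans (subset_leq_card sub) (leq_card_setU _ _).
rewrite -(ler_nat R) in c; apply: (le_trans c); apply: (le_trans hE).
apply: ler_wpM2r => //; apply: exprn_ge0; by rewrite ler0n.
Qed.

End Cuts.

Lemma graph_main (R : realType) (T : finType) (e : rel T) (n D k l : nat)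
  (Vs : 'I_k -> {set T}) (As Bs : 'I_l -> {set T})
  (rho nu tau alpha zeta delta gamma beta eta : R) :
  (0 < n)%N -> simple_graph e -> #|T| = n -> regular e D -> alpha * n%:R <= D%:R ->
  robust_partition e n D rho nu tau Vs As Bs ->
  0 < alpha -> alpha < 1 -> delta = alpha * alpha / 2 ->
  tau <= delta / 4 -> 8 * rho <= nu * nu * (delta * delta) -> 2 * rho <= nu * delta ->
  0 < zeta -> zeta * 16 < delta * delta -> zeta * 2 < nu * nu ->
  gamma * 2 < nu * nu * (delta * delta) -> gamma * 8 < delta * delta ->
  rho <= beta -> 2 * rho <= alpha * eta ->
  clustering e n D alpha (rp_part Vs As Bs) (@rp_spec T k l As Bs)
    zeta delta gamma beta eta.
Proof.
move=> npos [esym eirr] cardT reg hD RP a0 a1 hdelta htd hr1 hr2 z0 hz1 hz2 hg1 hg2 hb he.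
move: RP; rewrite /robust_partition; cbv zeta.
move=> [[r0 [rn [nt t1]]] [[hdis hcov] [hD2 [hD3 [hD4 [hD5 [hD6 hD7]]]]]]].
set P := rp_part Vs As Bs in hdis hcov hD4 hD7 *.
have nu0 : 0 < nu by lra.
have t1' : rho < 1 by lra.
have t0 : 0 < tau by lra.
have n0 : 0 < n%:R :> R by rewrite ltr0n.
have D0 : 0 < D%:R :> R by apply: (lt_le_trans _ hD); apply: mulr_gt0.
have cardn : forall S : {set T}, (#|S| <= n)%N.
  by move=> S; rewrite -cardT; apply: max_card.
have dsum : forall x, (\sum_p deg_in e (P p) x)%N = D.
  move=> x; rewrite -(reg x) /deg_in (part_card hdis hcov [set u in [set: T] | e x u]).
  apply: eq_bigr => p _; apply: eq_card => u; rewrite !inE.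
  by case: (u \in P p); case: (e x u).
have dK : forall p x, x \in P p -> (D <= (k + l) * deg_in e (P p) x)%N.
  move=> p x xp; rewrite -(dsum x).
  have h : (\sum_q deg_in e (P q) x <= \sum_(q : 'I_k + 'I_l) deg_in e (P p) x)%N.
    by apply: leq_sum => q _; apply: hD4.
  apply: (leq_trans h).
  by rewrite sum_nat_const card_sum !card_ord.
have hK : (k + l)%:R * D%:R <= 2 * n%:R :> R.
  have p1 : rho `^ (3%:R^-1) <= 1.
    have := @ger_powR R rho; rewrite r0 /= (ltW t1') => h.
    have := h isT 0 (3%:R^-1); rewrite powRr0; apply; by rewrite invr_ge0.
  have := hD6; rewrite -/(n%:R) => h6.
  have h7 := le_trans h6 (floor_le _).
  have h8 : (1 + rho `^ 3%:R^-1) * n%:R / D%:R <= 2 * n%:R / D%:R.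
    rewrite ler_pM2r ?invr_gt0 //; apply: ler_wpM2r; lra.
  have h9 := le_trans h7 h8.
  rewrite ler_pdivlMr // in h9.
  have h10 : (k + l)%:R <= (k + 2 * l)%:R :> R.
    by rewrite ler_nat leq_add2l -{1}(mul1n l) leq_mul2r orbT.
  apply: (le_trans _ h9); apply: ler_wpM2r; [lra | exact: h10].
have mindeg : forall p x, x \in P p -> delta * n%:R <= (deg_in e (P p) x)%:R.
  move=> p x xp; have := dK p x xp; rewrite -(ler_nat R) natrM => h1.
  set d := (deg_in e (P p) x)%:R in h1 *.
  set K := (k + l)%:R in h1 hK.
  have K0 : 0 <= K by rewrite ler0n.
  have d0 : 0 <= d by rewrite ler0n.
  have q1 : alpha * n%:R * D%:R <= D%:R * D%:R by apply: ler_wpM2r; lra.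
  have q2 : D%:R * D%:R <= K * d * D%:R by apply: ler_wpM2r; lra.
  have q3 : K * d * D%:R <= 2 * n%:R * d by rewrite mulrAC; apply: ler_wpM2r.
  have q4 : alpha * D%:R <= 2 * d.
    have : alpha * D%:R * n%:R <= 2 * d * n%:R by nra.
    by rewrite ler_pM2r.
  have : alpha * (alpha * n%:R) <= alpha * D%:R by apply: ler_wpM2l; lra.
  rewrite hdelta; lra.
have d0 : 0 < delta by rewrite hdelta; apply: divr_gt0; [apply: mulr_gt0|]; lra.
have d1 : delta < 1 by rewrite hdelta; nra.
have ne : forall p, P p != set0.
  move=> [i|j]; rewrite /P /=.
  - case: (hD2 i) => h _ _; rewrite -cards_eq0 -lt0n -(ltr0n R).
    apply: lt_le_trans h; apply: mulr_gt0 => //; by rewrite sqrtr_gt0.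
  - case: (hD3 j) => _ [h _] _ _ _; rewrite -cards_eq0 -lt0n -(ltr0n R).
    apply: lt_le_trans (le_trans h _); first by apply: mulr_gt0 => //; rewrite sqrtr_gt0.
    by rewrite ler_nat; apply: subset_leq_card; apply: subsetUl.
split; first exact: hD.
split; first by split; [exact: hdis | split; [exact: hcov | exact: ne]].
split.
  rewrite /cross_part_edges; set C := [set _ : {set T} | _].
  have sub : C \subset (\bigcup_(i in [set: 'I_k]) Eset e (Vs i) (~: Vs i)) :|:
      (\bigcup_(j in [set: 'I_l]) (Eset e (As j) (~: Bs j) :|: Eset e (Bs j) (~: As j))).
    apply/subsetP => s; rewrite inE => /existsP [x /existsP [y /and3P [/eqP -> exy /forallP hall]]].
    have [q xq] := hcov x.
    have := hall q; rewrite xq /= => yq.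
    case: q xq yq => [i|j] /= xq yq.
    - rewrite in_setU; apply/orP; left; apply/bigcupP; exists i; first by rewrite in_setT.
      rewrite inE; apply/existsP; exists x; apply/existsP; exists y.
      by rewrite eqxx exy xq inE yq.
    - rewrite in_setU; apply/orP; right; apply/bigcupP; exists j; first by rewrite in_setT.
      rewrite in_setU negb_or in yq; case/andP: yq => yA yB.
      move: xq; rewrite inE => /orP [xA|xB].
      + rewrite in_setU; apply/orP; left.
        rewrite inE; apply/existsP; exists x; apply/existsP; exists y.
        by rewrite eqxx exy xA inE yB.
      + rewrite in_setU; apply/orP; right.
        rewrite inE; apply/existsP; exists x; apply/existsP; exists y.
        by rewrite eqxx exy xB inE yA.
  have c1 := leq_trans (subset_leq_card sub) (leq_card_setU _ _).
  have b1 := card_bigcup [set: 'I_k] (fun i => Eset e (Vs i) (~: Vs i)).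
  have b2 := card_bigcup [set: 'I_l] (fun j => Eset e (As j) (~: Bs j) :|: Eset e (Bs j) (~: As j)).
  have b3 : (\sum_(j in [set: 'I_l]) #|Eset e (As j) (~: Bs j) :|: Eset e (Bs j) (~: As j)|
     <= \sum_(j in [set: 'I_l]) (#|Eset e (As j) (~: Bs j)| + #|Eset e (Bs j) (~: As j)|))%N.
    by apply: leq_sum => j _; apply: leq_card_setU.
  have c2 := leq_trans c1 (leq_add b1 (leq_trans b2 b3)).
  rewrite -(ler_nat R) natrD in c2.
  have s1 : ((\sum_(i in [set: 'I_k]) #|Eset e (Vs i) (~: Vs i)|)%N)%:R <= k%:R * (rho * n%:R ^+ 2).
    rewrite natr_sum; apply: (le_trans (y := \sum_(i in [set: 'I_k]) rho * n%:R ^+ 2)).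
      by apply: ler_sum => i _; case: (hD2 i).
    by rewrite sumr_const cardsT card_ord mulr_natl.
  have s2 : ((\sum_(j in [set: 'I_l]) (#|Eset e (As j) (~: Bs j)| + #|Eset e (Bs j) (~: As j)|))%N)%:R
      <= l%:R * (rho * n%:R ^+ 2).
    rewrite natr_sum; apply: (le_trans (y := \sum_(i in [set: 'I_l]) rho * n%:R ^+ 2)).
      by apply: ler_sum => j _; case: (hD3 j).
    by rewrite sumr_const cardsT card_ord mulr_natl.
  have hKa : (k + l)%:R * alpha <= 2 :> R.
    have : (k + l)%:R * (alpha * n%:R) <= (k + l)%:R * D%:R by apply: ler_wpM2l => //; rewrite ler0n.
    move=> h; have h2 : (k + l)%:R * alpha * n%:R <= 2 * n%:R.
      by rewrite -mulrA; apply: le_trans h hK.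
    by rewrite ler_pM2r in h2.
  have hKr : (k + l)%:R * rho <= eta.
    have : (k + l)%:R * rho * alpha <= eta * alpha.
      have : (k + l)%:R * alpha * rho <= 2 * rho by apply: ler_wpM2r; [exact: ltW r0 | exact: hKa].
      rewrite mulrAC => h; apply: (le_trans h); by rewrite [eta * _]mulrC.
    by rewrite ler_pM2r.
  apply: (le_trans c2); apply: (le_trans (lerD s1 s2)).
  rewrite -mulrDl -natrD mulrA; apply: ler_wpM2r; last exact: hKr.
  by apply: exprn_ge0; rewrite ler0n.
split; first exact: mindeg.
split.
  move=> [i|j] X1 X2 [U d ne1 ne2].
  - case: (hD2 i) => _ _ exp.
    exact: (cutV esym n0 z0 t0 nu0 d0 d1 U d ne1 ne2 (cardn _) exp (mindeg (inl i)) htd hz1 hz2).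
  - case: (hD3 j) => dAB _ habs hE bexp.
    case: (hD5 j) => _ hB5.
    have eAA : (eG e (As j) (As j))%:R <= rho * n%:R ^+ 2.
      apply: le_trans hE; rewrite ler_nat; apply: leq_trans (leq_addr _ _).
      apply: eG_mono => //; apply/subsetP => x xA; by rewrite inE (disjointFr dAB xA).
    have hBA : #|Bs j|%:R <= #|As j|%:R + rho * n%:R.
      have := ler_distlCBl habs; lra.
    have r0' : 0 < rho by [].
    exact: (cutW esym eirr n0 z0 t0 nu0 r0' d0 d1 dAB U d ne1 ne2 (cardn _) bexp hB5
      (mindeg (inr j)) eAA hBA htd hr1 hr2 hz1 hz2).
move=> [i|j] /=.
- have [x0 x0V] := set0Pn _ (ne (inl i)).
  case: (hD2 i) => _ _ exp.
  have htd2 : tau <= delta / 2 by lra.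
  exact: (far_V esym eirr n0 nu0 t0 d0 htd2 (cardn _) x0V exp (mindeg (inl i)) hg1 hg2).
- case: (hD3 j) => dAB _ _ hE _.
  exact: (almW esym dAB hE hb).
Qed.

Section UN.
Variable R : realType.

Lemma un_comp (f g : R -> R) : unit_nondecr f -> unit_nondecr g ->
  unit_nondecr (fun x => f (g x)).
Proof.
move=> [f1 f2] [g1 g2]; split; first by move=> x hx; apply: f1; apply: g1.
by move=> x y hx hy hxy; apply: f2; [apply: g1 | apply: g1 | apply: g2].
Qed.

Lemma un_min (f g : R -> R) : unit_nondecr f -> unit_nondecr g ->
  unit_nondecr (fun x => Num.min (f x) (g x)).
Proof.
move=> [f1 f2] [g1 g2]; split.
  move=> x hx; have /andP [a1 a2] := f1 x hx; have /andP [b1 b2] := g1 x hx.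
  by apply/andP; split; [rewrite lt_min a1 b1 | rewrite gt_min a2].
move=> x y hx hy hxy; rewrite le_min !ge_min.
by rewrite (f2 x y hx hy hxy) (g2 x y hx hy hxy) orbT.
Qed.

Lemma un_mul (f g : R -> R) : unit_nondecr f -> unit_nondecr g ->
  unit_nondecr (fun x => f x * g x).
Proof.
move=> [f1 f2] [g1 g2]; split.
  move=> x hx; have /andP [a1 a2] := f1 x hx; have /andP [b1 b2] := g1 x hx.
  apply/andP; split; first exact: mulr_gt0.
  nra.
move=> x y hx hy hxy; have /andP [a1 _] := f1 x hx; have /andP [b1 _] := g1 x hx.
by apply: ler_pM; [exact: ltW|exact: ltW|apply: f2|apply: g2].
Qed.

Lemma un_id : unit_nondecr (fun x : R => x).
Proof. by split. Qed.

Lemma un_scale (f : R -> R) (c : R) : 1 <= c -> unit_nondecr f ->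
  unit_nondecr (fun x => f x / c).
Proof.
move=> c1 [f1 f2]; have c0 : 0 < c by lra.
split.
  move=> x hx; have /andP [a1 a2] := f1 x hx; apply/andP; split.
    exact: divr_gt0.
  by rewrite ltr_pdivrMr // mul1r; lra.
move=> x y hx hy hxy; rewrite ler_pM2r ?invr_gt0 //; exact: f2.
Qed.

Lemma un_pow (k : nat) : unit_nondecr (fun x : R => x ^+ k.+1).
Proof.
elim: k => [|k IH]; first by split => // x; rewrite expr1.
have := un_mul un_id IH; move=> [h1 h2]; split.
- by move=> x hx; rewrite exprS; apply: h1.
- by move=> x y hx hy hxy; rewrite (exprS x) (exprS y); apply: h2.
Qed.

End UN.

Definition zf (R : realType) (f : R -> R) x := Num.min (f x) (x ^+ 4 / 128).
Definition gf (R : realType) (f : R -> R) x := Num.min (f (zf f x)) (x ^+ 6 / 16).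
Definition bf (R : realType) (f : R -> R) x := f (gf f x).
Definition hf (R : realType) (f : R -> R) x := f (bf f x).
Definition fpf (R : realType) (f : R -> R) x :=
  Num.min (Num.min (Num.min (f (hf f x)) (x * hf f x / 2)) (Num.min (bf f x) (x ^+ 6 / 64)))
          (Num.min (x ^+ 2 / 8) (f x / 2)).

Lemma un_all (R : realType) (f : R -> R) : unit_nondecr f ->
  [/\ unit_nondecr (zf f), unit_nondecr (gf f), unit_nondecr (bf f),
      unit_nondecr (hf f) & unit_nondecr (fpf f)].
Proof.
move=> uf.
have c128 : 1 <= 128 :> R by rewrite ler1n.
have c16 : 1 <= 16 :> R by rewrite ler1n.
have c64 : 1 <= 64 :> R by rewrite ler1n.
have c8 : 1 <= 8 :> R by rewrite ler1n.
have c2 : 1 <= 2 :> R by rewrite ler1n.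
have uz : unit_nondecr (zf f) by apply: un_min uf (un_scale c128 (un_pow _ 3)).
have ug : unit_nondecr (gf f) by apply: un_min (un_comp uf uz) (un_scale c16 (un_pow _ 5)).
have ub : unit_nondecr (bf f) by apply: un_comp uf ug.
have uh : unit_nondecr (hf f) by apply: un_comp uf ub.
split => //.
apply: un_min; apply: un_min.
- apply: un_min; first exact: un_comp uf uh.
  exact: (@un_scale R (fun x => x * hf f x) 2 c2 (un_mul (un_id R) uh)).
- apply: (@un_min R (bf f) (fun x => x ^+ 6 / 64)) => //.
  exact: (@un_scale R (fun x => x ^+ 6) 64 c64 (un_pow _ 5)).
- exact: (@un_scale R (fun x => x ^+ 2) 8 c8 (un_pow _ 1)).
- exact: (@un_scale R f 2 c2 uf).
Qed.

Unset Implicit Arguments.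
Theorem mainTheorem17 (R : realType) (f : R -> R) :
  unit_nondecr f ->
  exists f' : R -> R,
    unit_nondecr f' /\ (forall x, in01 x -> f' x < f x) /\
    forall (rho nu tau alpha : R) (n k l : nat),
      in01 rho -> in01 nu -> in01 tau -> in01 alpha -> (0 < n)%N ->
      n%:R^-1 <= rho -> rho <= f' nu -> nu <= tau -> tau <= f' alpha ->
      exists zeta delta gamma beta eta : R,
        [/\ in01 zeta, in01 delta, in01 gamma, in01 beta & in01 eta] /\
        [/\ rho <= f eta, eta <= f beta, beta <= f gamma, gamma <= f zeta
           & zeta <= f nu] /\ tau < delta < alpha /\
        forall (T : finType) (e : rel T) (D : nat),
          simple_graph e -> #|T| = n -> regular e D -> alpha * n%:R <= D%:R ->
          forall (Vs : 'I_k -> {set T}) (As Bs : 'I_l -> {set T}),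
            robust_partition e n D rho nu tau Vs As Bs ->
            clustering e n D alpha (rp_part Vs As Bs) (@rp_spec T k l As Bs)
              zeta delta gamma beta eta.
Proof.
move=> uf; have [uz ug ub uh ufp] := un_all uf.
exists (fpf f); split; first exact: ufp.
split.
  move=> x hx; have /andP [f0 _] := uf.1 x hx.
  have : fpf f x <= f x / 2.
    by rewrite /fpf ge_min; apply/orP; right; rewrite ge_min lexx orbT.
  lra.
move=> rho nu tau alpha n k l hr hnu ht ha npos hn hrf hnt hta.
have /andP [r0 r1] := hr; have /andP [nu0 nu1] := hnu.
have /andP [t0 t1] := ht; have /andP [a0 a1] := ha.
move: hrf; rewrite /fpf !le_min => /andP [/andP [/andP [h1 h2] /andP [h3 h4]] /andP [h5 h6]].
move: hta; rewrite /fpf !le_min => /andP [_ /andP [ta _]].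
set zeta := zf f nu; set gamma := gf f nu; set beta := bf f nu; set eta := hf f nu.
set delta := alpha * alpha / 2.
have iz := uz.1 nu hnu; have ig := ug.1 nu hnu; have ib := ub.1 nu hnu.
have ih := uh.1 nu hnu.
have z1 : zeta <= f nu by rewrite /zeta /zf ge_min lexx.
have z2 : zeta <= nu ^+ 4 / 128 by rewrite /zeta /zf ge_min lexx orbT.
have g1 : gamma <= f zeta by rewrite /gamma /gf ge_min lexx.
have g2 : gamma <= nu ^+ 6 / 16 by rewrite /gamma /gf ge_min lexx orbT.
have /andP [zz0 _] := iz; have /andP [gg0 _] := ig; have /andP [ee0 _] := ih.
have nua : nu <= alpha by nra.
have d0 : 0 < delta by rewrite /delta; nra.
have dl : delta < alpha by rewrite /delta; nra.
have dnu : nu * nu / 2 <= delta by rewrite /delta; nra.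
exists zeta, delta, gamma, beta, eta.
split.
  split => //; apply/andP; split => //; lra.
split.
  split => //; rewrite /eta /hf /beta /bf //.
split.
  apply/andP; split; rewrite /delta; nra.
move=> T e D sg cT reg hD Vs As Bs RP.
have n2 : nu ^+ 2 = nu * nu by rewrite expr2.
have n4 : nu ^+ 4 = (nu * nu) * (nu * nu) by rewrite !exprS expr0 mulr1; ring.
have n6 : nu ^+ 6 = (nu * nu) * (nu * nu) * (nu * nu) by rewrite !exprS expr0 mulr1; ring.
rewrite n4 in z2; rewrite n6 in g2 h4; rewrite expr2 in ta.
set q := nu * nu in z2 g2 h4 dnu *.
have q0 : 0 < q by rewrite /q; nra.
have q1 : q < 1 / 64.
  have : nu < 1 / 8 by nra.
  rewrite /q; nra.
have dd : q * q / 4 <= delta * delta by nra.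
have qdd : q * (q * q / 4) <= q * (delta * delta) by apply: ler_wpM2l; lra.
have htd : tau <= delta / 4 by rewrite /delta; lra.
have hr1 : 8 * rho <= nu * nu * (delta * delta) by rewrite -/q; nra.
have hr2 : 2 * rho <= nu * delta.
  have h : nu * (q / 2) <= nu * delta by apply: ler_wpM2l; lra.
  have qn : q <= nu by rewrite /q; nra.
  have qq : q * q <= nu by nra.
  have : q * q * q <= nu * q by apply: ler_wpM2r; lra.
  lra.
have hz1 : zeta * 16 < delta * delta by nra.
have hz2 : zeta * 2 < nu * nu by rewrite -/q; nra.
have hg1 : gamma * 2 < nu * nu * (delta * delta) by rewrite -/q; nra.
have hg2 : gamma * 8 < delta * delta by nra.
have he : 2 * rho <= alpha * eta.
  rewrite /eta.
  have : nu * hf f nu <= alpha * hf f nu by apply: ler_wpM2r; [exact: ltW ee0 | exact: nua].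
  lra.
exact: (graph_main npos sg cT reg hD RP a0 a1 (erefl _) htd hr1 hr2 zz0 hz1 hz2 hg1 hg2 h3 he).
Qed.
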